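(* Write $\dfrac{(q;q)_\infty^2}{(q^2;q^2)_\infty(q^3;q^3)_\infty^2}=\sum_{n\ge0}a_nq^n$. Then for all $n\ge0$: $a_n>0$ if $n\equiv0\pmod3$, $a_n<0$ if $n\equiv1\pmod3$, and $a_n=0$ if $n\equiv2\pmod3$.
   Context: For $|q|<1$, $(a;q)_\infty=\prod_{k\ge0}(1-aq^k)$. *)

(* Defs.v *)
(* Formal power series in q over int, represented via
   truncations: the coefficient of q^n of the formal product is read off a
   finite polynomial truncation that agrees with it up to degree n. *)
From HB Require Import structures.
From mathcomp Require Import all_boot all_order all_algebra.
Set Implicit Arguments. Unset Strict Implicit. Unset Printing Implicit Defensive.
Import Order.TTheory GRing.Theory Num.Theory.
Local Open Scope ring_scope.

(* truncated geometric series 1/(1 - q^k) = sum_{j>=0} q^(k j), terms j <= N *)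
Definition geomP (k N : nat) : {poly int} := \sum_(j < N.+1) 'X^(k * j).

(* Truncation of (q;q)_oo^2 / ((q^2;q^2)_oo (q^3;q^3)_oo^2):
   (q^m;q^m)_oo = prod_{k>=1} (1 - q^(m k)); factors k > N and geometric
   terms j > N only affect degrees > N. *)
Definition trunc_prod (N : nat) : {poly int} :=
  \prod_(1 <= k < N.+1)
     ((1 - 'X^k) ^+ 2 * geomP (2 * k) N * (geomP (3 * k) N) ^+ 2).

Definition a (n : nat) : int := (trunc_prod n)`_n.

(* Main.v *)
Require Import Defs.
From HB Require Import structures.
From mathcomp Require Import all_boot all_order all_algebra.
From mathcomp Require Import zify ring.
From Stdlib Require Import Setoid Morphisms.
Set Implicit Arguments. Unset Strict Implicit. Unset Printing Implicit Defensive.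
Import Order.TTheory GRing.Theory Num.Theory.
Local Open Scope ring_scope.

Definition eqm (N : nat) (p q : {poly int}) := forall i, (i <= N)%N -> p`_i = q`_i.

Lemma eqm_refl N : Reflexive (eqm N). Proof. by move=> p i. Qed.
Lemma eqm_sym N : Symmetric (eqm N). Proof. by move=> p q H i Hi; rewrite H. Qed.
Lemma eqm_trans N : Transitive (eqm N). Proof. by move=> p q r H1 H2 i Hi; rewrite H1 ?H2. Qed.

Add Parametric Relation N : {poly int} (eqm N)
  reflexivity proved by (@eqm_refl N)
  symmetry proved by (@eqm_sym N)
  transitivity proved by (@eqm_trans N) as eqm_rel.

Add Parametric Morphism N : (@GRing.add {poly int}) with signature
  eqm N ==> eqm N ==> eqm N as eqm_add.
Proof. by move=> p p' H q q' H' i Hi; rewrite !coefD H ?H'. Qed.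

Add Parametric Morphism N : (@GRing.mul {poly int}) with signature
  eqm N ==> eqm N ==> eqm N as eqm_mul.
Proof.
move=> p p' H q q' H' i Hi; rewrite !coefM; apply: eq_bigr => j _.
have hj : (j <= N)%N by apply: leq_trans Hi; rewrite -ltnS.
by rewrite H // H' // (leq_trans (leq_subr _ _) Hi).
Qed.

Add Parametric Morphism N : (@GRing.opp {poly int}) with signature
  eqm N ==> eqm N as eqm_opp.
Proof. by move=> p p' H i Hi; rewrite !coefN H. Qed.

Add Parametric Morphism N : (@GRing.exp {poly int}) with signature
  eqm N ==> eq ==> eqm N as eqm_exp.
Proof.
move=> p p' H k; elim: k => [|k IH]; first by [].
rewrite !exprS; exact: eqm_mul_Proper.
Qed.


Lemma eqm_prod N L (F G : nat -> {poly int}) :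
  (forall k, (k < L)%N -> eqm N (F k) (G k)) ->
  eqm N (\prod_(k < L) F k) (\prod_(k < L) G k).
Proof.
elim: L => [|L IH] H; first by rewrite !big_ord0.
rewrite !big_ord_recr /=; apply: eqm_mul_Proper; last exact: H.
by apply: IH => k Hk; apply: H; apply: ltnW.
Qed.

Lemma eqm_sum N L (F G : nat -> {poly int}) :
  (forall k, (k < L)%N -> eqm N (F k) (G k)) ->
  eqm N (\sum_(k < L) F k) (\sum_(k < L) G k).
Proof.
elim: L => [|L IH] H; first by rewrite !big_ord0.
rewrite !big_ord_recr /=; apply: eqm_add_Proper; last exact: H.
by apply: IH => k Hk; apply: H; apply: ltnW.
Qed.

Lemma eqm_prod1 N L (F : nat -> {poly int}) :
  (forall k, (k < L)%N -> eqm N (F k) 1) -> eqm N (\prod_(k < L) F k) 1.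
Proof.
elim: L => [|L IH] H; first by rewrite !big_ord0.
rewrite !big_ord_recr /= -[X in eqm _ _ X]mulr1; apply: eqm_mul_Proper; last exact: H.
by apply: IH => k Hk; apply: H; apply: ltnW.
Qed.

Lemma eqm_high N k (p : {poly int}) : (N < k)%N -> eqm N ('X^k * p) 0.
Proof.
move=> Hk i Hi; rewrite coefXnM coef0.
by rewrite (leq_ltn_trans Hi Hk).
Qed.

Lemma eqm_high' N k (p : {poly int}) : (N < k)%N -> eqm N (p * 'X^k) 0.
Proof. by move=> Hk; rewrite mulrC; apply: eqm_high. Qed.

Lemma geom_tel e M : (1 - 'X^e) * (\sum_(j < M.+1) 'X^(e * j)) = 1 - 'X^(e * M.+1) :> {poly int}.
Proof.
elim: M => [|M IH]; first by rewrite big_ord1 muln0 muln1 expr0 mulr1.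
rewrite big_ord_recr /= mulrDr IH.
have -> : (e * M.+2 = e + e * M.+1)%N by rewrite mulnS.
by rewrite exprD; ring.
Qed.

Lemma geom_inv N e : (0 < e)%N -> eqm N ((1 - 'X^e) * geomP e N) 1.
Proof.
move=> He; rewrite /geomP geom_tel.
have H : eqm N ('X^(e * N.+1) * 1) 0.
  by apply: eqm_high; nia.
rewrite -[X in eqm _ (_ - X) _]mulr1.
setoid_rewrite H; by rewrite subr0.
Qed.

Definition P (a d L : nat) : {poly int} := \prod_(k < L) (1 - 'X^(a + d * k)).
Definition Q (N a d L : nat) : {poly int} := \prod_(k < L) geomP (a + d * k) N.

Lemma PQ_inv N a d L : (0 < a)%N -> eqm N (P a d L * Q N a d L) 1.
Proof.
move=> Ha; rewrite /P /Q -big_split /=.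
apply: (@eqm_prod1 N L (fun k => (1 - 'X^(a + d * k)) * geomP (a + d * k) N)) => k _.
apply: geom_inv; by rewrite addn_gt0 Ha.
Qed.

Lemma P_split a d L r : P a d (L + r) = P a d L * \prod_(k < r) (1 - 'X^(a + d * (L + k))).
Proof. by rewrite /P big_split_ord. Qed.

Lemma P_trunc N a d L L' : (0 < a)%N -> (0 < d)%N -> (N <= L)%N -> (N <= L')%N ->
  eqm N (P a d L) (P a d L').
Proof.
have key : forall L r, (0 < a)%N -> (0 < d)%N -> (N <= L)%N -> eqm N (P a d (L + r)) (P a d L).
  move=> L0 r Ha Hd HL; rewrite P_split.
  rewrite -[X in eqm _ _ X]mulr1; apply: eqm_mul_Proper; first reflexivity.
  apply: (@eqm_prod1 N r (fun k => 1 - 'X^(a + d * (L0 + k)))) => k _.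
  have H : eqm N ('X^(a + d * (L0 + k)) * 1) 0.
    by apply: eqm_high; nia.
  rewrite -[X in eqm _ (_ - X) _]mulr1. setoid_rewrite H; by rewrite subr0.
move=> Ha Hd HL HL'; case: (leqP L L') => H.
  by rewrite -(subnKC H); symmetry; apply: key.
by rewrite -(subnKC (ltnW H)); apply: key.
Qed.

Lemma P_inter2 a d L : P a (2 * d) L * P (a + d) (2 * d) L = P a d (2 * L).
Proof.
elim: L => [|L IH]; first by rewrite /P muln0 !big_ord0 mulr1.
rewrite /P in IH *; have -> : (2 * L.+1 = (2 * L).+2)%N by lia.
rewrite !big_ord_recr /= -IH.
have -> : (a + d * (2 * L).+1 = a + d + 2 * d * L)%N by ring.
have -> : (a + d * (2 * L) = a + 2 * d * L)%N by ring.
ring.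
Qed.

Lemma P_inter3 a d L : P a (3 * d) L * P (a + d) (3 * d) L * P (a + 2 * d) (3 * d) L = P a d (3 * L).
Proof.
elim: L => [|L IH]; first by rewrite /P muln0 !big_ord0 !mulr1.
rewrite /P in IH *; have -> : (3 * L.+1 = (3 * L).+3)%N by lia.
rewrite !big_ord_recr /= -IH.
have -> : (a + d * (3 * L).+2 = a + 2 * d + 3 * d * L)%N by ring.
have -> : (a + d * (3 * L).+1 = a + d + 3 * d * L)%N by ring.
have -> : (a + d * (3 * L) = a + 3 * d * L)%N by ring.
ring.
Qed.

Fixpoint tri (i : nat) : nat := if i is i'.+1 then (tri i' + i')%N else 0%N.

Lemma tri2 i : (2 * tri i = i * i.-1)%N.
Proof. elim: i => //= i IH; case: i IH => //= i IH; nia. Qed.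

Fixpoint qb (p : {poly int}) (m i : nat) : {poly int} :=
  match m, i with
  | 0, 0 => 1%R
  | 0, _.+1 => 0%R
  | m'.+1, 0 => 1%R
  | m'.+1, i'.+1 => (qb p m' i' + p ^+ i'.+1 * qb p m' i'.+1)%R
  end.

Lemma qb0 p m : qb p m 0 = 1. Proof. by case: m. Qed.

Lemma qb_gt p m i : (m < i)%N -> qb p m i = 0.
Proof.
elim: m i => [|m IH] [|i] //= H.
by rewrite !IH ?mulr0 ?addr0 // ltnW.
Qed.

Lemma rothe p m : forall u v : {poly int},
  \prod_(k < m) (u + v * p ^+ k) =
  \sum_(i < m.+1) p ^+ tri i * qb p m i * v ^+ i * u ^+ (m - i).
Proof.
elim: m => [|m IH] u v.
  by rewrite big_ord0 big_ord1 /= !expr0 !mulr1.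
rewrite big_ord_recl /= expr0 mulr1.
have -> : \prod_(i < m) (u + v * p ^+ (bump 0 i)) = \prod_(k < m) (u + (v * p) * p ^+ k).
  by apply: eq_bigr => i _; rewrite /bump /= add1n exprS mulrA.
rewrite IH mulrDl.
rewrite [in RHS]big_ord_recl /= !expr0 !mulr1 subn0.
rewrite [in RHS](eq_bigr (fun i : 'I_m.+1 =>
   p ^+ tri i * p ^+ i * qb p m i * v ^+ i.+1 * u ^+ (m - i) +
   p ^+ tri i * p ^+ i * p ^+ i.+1 * qb p m i.+1 * v ^+ i.+1 * u ^+ (m - i))); last first.
  by move=> i _; rewrite /bump /= !add0n add1n subSS exprD mulrDr !mulrDl !mulrA.
rewrite mul1r.
rewrite big_split /= [LHS]addrC addrCA; congr (_ + _).
  rewrite big_distrr /=; apply: eq_bigr => i _; rewrite exprMn exprS; ring.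
rewrite big_distrr /= big_ord_recl /= qb0 !expr0 !mulr1 subn0.
rewrite [X in _ = _ + X]big_ord_recr /= qb_gt // !mulr0 !mul0r addr0.
rewrite mul1r -exprS; congr (_ + _); apply: eq_bigr => i _.
rewrite /bump /= !add0n add1n.
rewrite -(subnSK (ltn_ord i)) exprS exprMn !exprS /= exprD.
ring.
Qed.

Definition fq (p : {poly int}) k := \prod_(l < k) (1 - p ^+ l.+1).

Lemma fqS p k : fq p k.+1 = fq p k * (1 - p ^+ k.+1).
Proof. by rewrite /fq big_ord_recr. Qed.

Lemma qb_f p m i : (i <= m)%N -> qb p m i * fq p i * fq p (m - i) = fq p m.
Proof.
elim: m i => [|m IH] [|i] //= Hi.
- by rewrite /fq !big_ord0 !mulr1.
- by rewrite subn0 /fq big_ord0 !mul1r.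
rewrite subSS mulrDl mulrDl fqS.
have H1 : qb p m i * (fq p i * (1 - p ^+ i.+1)) * fq p (m - i) = fq p m * (1 - p ^+ i.+1).
  by rewrite -(IH i) //; ring.
case: (ltngtP i m) => Him; last 2 first.
- by move: Hi; rewrite ltnNge Him.
- rewrite Him in H1 *.
  by rewrite (@qb_gt p m m.+1) // mulr0 !mul0r addr0 H1 -fqS.
rewrite H1.
have E : (m - i = (m - i.+1).+1)%N by rewrite subnSK.
rewrite E fqS -E.
have H2 : p ^+ i.+1 * qb p m i.+1 * (fq p i * (1 - p ^+ i.+1)) * (fq p (m - i.+1) * (1 - p ^+ (m - i))) =
   p ^+ i.+1 * (1 - p ^+ (m - i)) * (qb p m i.+1 * fq p i.+1 * fq p (m - i.+1)).
  by rewrite fqS; ring.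
rewrite H2 IH // fqS.
have -> : (m.+1 = i.+1 + (m - i))%N by rewrite addSn subnKC // ltnW.
by rewrite exprD; ring.
Qed.

Lemma prodX a n : \prod_(k < n) ('X^(a * k) : {poly int}) = 'X^(a * tri n).
Proof.
elim: n => [|n IH]; first by rewrite big_ord0 muln0.
by rewrite big_ord_recr /= IH -exprD /= mulnDr.
Qed.

Lemma X2b_pow b k : ('X^(2 * b) : {poly int}) ^+ k = 'X^(2 * b * k).
Proof. by rewrite -exprM. Qed.

Section JTP.
Variables (s c n : nat).
Let b := (s + c)%N.
Let t := (s + 2 * c)%N.
Let p : {poly int} := 'X^(2 * b).
Definition ee i := (b * (i * i.-1) + s * i + 2 * b * n * (2 * n - i))%N.
Definition MM := (s * n + b * (n * n.-1) + 2 * b * n * n)%N.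

Lemma jtp_exact :
  ((-1) ^+ n * 'X^MM) * (P s (2 * b) n * P t (2 * b) n) =
  \sum_(i < (2 * n).+1) (-1) ^+ i * 'X^(ee i) * qb p (2 * n) i.
Proof.
have R := rothe p (2 * n) ('X^(2 * b * n)) (- 'X^s).
have -> : \sum_(i < (2 * n).+1) (-1) ^+ i * 'X^(ee i) * qb p (2 * n) i =
   \sum_(i < (2 * n).+1) p ^+ tri i * qb p (2 * n) i * (- 'X^s) ^+ i * 'X^(2 * b * n) ^+ (2 * n - i).
  apply: eq_bigr => i _.
  rewrite /p -!exprM [(- 'X^s) ^+ i]exprNn -exprM /ee.
  have -> : (2 * b * tri i = b * (i * i.-1))%N by rewrite -tri2; ring.
  rewrite !exprD; ring.
rewrite -R.
have -> : (2 * n = n + n)%N by ring.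
rewrite big_split_ord /=.
have E2 : \prod_(k < n) ('X^(2 * b * n) + - 'X^s * p ^+ (n + k)) =
          'X^(2 * b * n * n) * P s (2 * b) n.
  rewrite /P (eq_bigr (fun k : 'I_n => 'X^(2 * b * n) * (1 - 'X^(s + 2 * b * k)))).
    by rewrite big_split /= prodr_const card_ord -exprM.
  move=> k _; rewrite /p X2b_pow mulrBr mulr1 mulNr -!exprD; congr (_ - 'X^_); ring.
have E1 : \prod_(k < n) ('X^(2 * b * n) + - 'X^s * p ^+ k) =
          (-1) ^+ n * 'X^(s * n) * 'X^(b * (n * n.-1)) * P t (2 * b) n.
  have -> : P t (2 * b) n = \prod_(k < n) (1 - 'X^(t + 2 * b * (n - k.+1))).
    by rewrite /P -(big_mkord xpredT (fun k => 1 - 'X^(t + 2 * b * k))) big_rev_mkord subn0.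
  rewrite (eq_bigr (fun k : 'I_n => (- 'X^s) * 'X^(2 * b * k) * (1 - 'X^(t + 2 * b * (n - k.+1))))).
    rewrite !big_split /= prodr_const card_ord prodX [(- 'X^s) ^+ n]exprNn -exprM.
    by have -> : (2 * b * tri n = b * (n * n.-1))%N by rewrite -tri2; ring.
  move=> k _; rewrite /p X2b_pow mulrBr mulr1 mulNr -!exprD.
  rewrite mulNr opprK -exprD addrC; congr (_ + 'X^_).
  have Hk := ltn_ord k.
  rewrite /t /b. nia.
rewrite E1 E2 /MM !exprD; ring.
Qed.
End JTP.

Lemma split_center (h : nat -> {poly int}) n :
  \sum_(i < (2 * n).+1) h i = h n + \sum_(k < n) (h (n + k.+1)%N + h (n - k.+1)%N).
Proof.
have -> : ((2 * n).+1 = n + n.+1)%N by ring.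
rewrite big_split_ord /= big_ord_recl /= addn0 big_split /=.
have -> : \sum_(i < n) h i = \sum_(k < n) h (n - k.+1)%N.
  by rewrite -(big_mkord xpredT h) big_rev_mkord subn0.
rewrite addrC -addrA; congr (_ + _); rewrite addrC; congr (_ + _).
Qed.

Lemma fqP b k : fq 'X^(2 * b) k = P (2 * b) (2 * b) k.
Proof. by apply: eq_bigr => l _; rewrite -exprM mulnS. Qed.

Definition theta s c n : {poly int} :=
  1 + \sum_(k < n) (-1) ^+ k.+1 *
      ('X^(s * k.+1 ^ 2 + c * k.+1 * k) + 'X^((s + c) * k.+1 ^ 2 + c * k.+1)).

Lemma qbE N b n i : (0 < b)%N -> (N <= n)%N -> (N <= i)%N -> (N <= 2 * n - i)%N -> (i <= 2 * n)%N ->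
  eqm N (qb 'X^(2 * b) (2 * n) i * P (2 * b) (2 * b) n) 1.
Proof.
move=> Hb Hn Hi Hi' Hi2.
have Hb2 : (0 < 2 * b)%N by rewrite muln_gt0.
have F0 := qb_f 'X^(2 * b) Hi2; rewrite !fqP in F0.
have F : eqm N (qb 'X^(2 * b) (2 * n) i * P (2 * b) (2 * b) i * P (2 * b) (2 * b) (2 * n - i))
   (P (2 * b) (2 * b) (2 * n)) by rewrite F0; reflexivity.
have T1 : eqm N (P (2 * b) (2 * b) i) (P (2 * b) (2 * b) n) by apply: P_trunc.
have T2 : eqm N (P (2 * b) (2 * b) (2 * n - i)) (P (2 * b) (2 * b) n) by apply: P_trunc.
have T3 : eqm N (P (2 * b) (2 * b) (2 * n)) (P (2 * b) (2 * b) n) by apply: P_trunc => //; lia.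
setoid_rewrite T1 in F; setoid_rewrite T2 in F; setoid_rewrite T3 in F.
have H2 := @PQ_inv N (2 * b) (2 * b) n Hb2.
rewrite -[X in eqm _ X _]mulr1.
setoid_rewrite <- H2.
rewrite mulrA.
setoid_rewrite F.
reflexivity.
Qed.

Lemma sgn2 n : (-1 : {poly int}) ^+ n * (-1) ^+ n = 1.
Proof. by rewrite -exprMn mulrNN mulr1 expr1n. Qed.

Lemma jtp_Z s c n :
  let b := (s + c)%N in let t := (s + 2 * c)%N in
  let E := P (2 * b) (2 * b) n in
  P s (2 * b) n * P t (2 * b) n * E =
  qb 'X^(2 * b) (2 * n) n * E +
  \sum_(k < n) (-1) ^+ k.+1 *
     ('X^(s * k.+1 ^ 2 + c * k.+1 * k) * (qb 'X^(2 * b) (2 * n) (n + k.+1) * E) +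
      'X^((s + c) * k.+1 ^ 2 + c * k.+1) * (qb 'X^(2 * b) (2 * n) (n - k.+1) * E)).
Proof.
move=> b t E.
have X0 : 'X^(MM s c n) != 0 :> {poly int} by rewrite monic_neq0 // monicXn.
apply: (mulfI X0).
have J := jtp_exact s c n.
have -> : 'X^(MM s c n) * (P s (2 * b) n * P t (2 * b) n * E) =
   ((-1) ^+ n * E) * ((-1) ^+ n * 'X^(MM s c n) * (P s (2 * b) n * P t (2 * b) n)).
  rewrite -[LHS]mul1r -{1}(sgn2 n).
  move: ((-1 : {poly int}) ^+ n) => m1; ring.
rewrite J big_distrr /=.
rewrite (split_center (fun i => (-1) ^+ n * E * ((-1) ^+ i * 'X^(ee s c n i) * qb 'X^(2 * (s + c)) (2 * n) i))).
rewrite mulrDr; congr (_ + _).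
  have -> : ee s c n n = MM s c n by rewrite /ee /MM; nia.
  transitivity (((-1) ^+ n * (-1) ^+ n) * ('X^(MM s c n) * (qb 'X^(2 * b) (2 * n) n * E))); last by rewrite sgn2 mul1r.
  move: ((-1 : {poly int}) ^+ n) => m1; rewrite /b; ring.
rewrite big_distrr /=; apply: eq_bigr => -[k Hk] _ /=.
have [r Hr] : exists r, n = (k.+1 + r)%N by exists (n - k.+1)%N; rewrite subnKC.
have E1 : ee s c n (n + k.+1) = (MM s c n + (s * k.+1 ^ 2 + c * k.+1 * k))%N.
  rewrite /ee /MM Hr.
  have -> : (2 * (k.+1 + r) - (k.+1 + r + k.+1) = r)%N by lia.
  have -> : ((k.+1 + r + k.+1).-1 = k.+1 + r + k)%N by lia.
  have -> : ((k.+1 + r).-1 = k + r)%N by lia.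
  ring.
have E2 : ee s c n (n - k.+1) = (MM s c n + ((s + c) * k.+1 ^ 2 + c * k.+1))%N.
  rewrite /ee /MM Hr.
  have -> : (k.+1 + r - k.+1 = r)%N by lia.
  have -> : (2 * (k.+1 + r) - r = k.+1 + k.+1 + r)%N by lia.
  have -> : ((k.+1 + r).-1 = k + r)%N by lia.
  case: r {Hr} => [|r]; first by rewrite /=; ring.
  have -> : (r.+1.-1 = r)%N by [].
  ring.
rewrite E1 E2 !(exprD _ (MM s c n)).
have S1 : (-1 : {poly int}) ^+ n * (-1) ^+ (n + k.+1) = (-1) ^+ k.+1.
  by rewrite exprD mulrA sgn2 mul1r.
have S2 : (-1 : {poly int}) ^+ n * (-1) ^+ (n - k.+1) = (-1) ^+ k.+1.
  have -> : n = ((n - k.+1) + k.+1)%N by rewrite subnK.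
  by rewrite addnK exprD mulrAC sgn2 mul1r.
set q1 := qb _ _ (n + k.+1). set q2 := qb _ _ (n - k.+1).
set X1 := 'X^(MM s c n). set X2 := 'X^(s * k.+1 ^ 2 + c * k.+1 * k).
set X3 := 'X^((s + c) * k.+1 ^ 2 + c * k.+1).
transitivity (((-1) ^+ n * (-1) ^+ (n + k.+1)) * (X1 * X2 * q1 * E) +
  ((-1) ^+ n * (-1) ^+ (n - k.+1)) * (X1 * X3 * q2 * E)).
  move: ((-1 : {poly int}) ^+ n) ((-1 : {poly int}) ^+ (n + k.+1)) ((-1 : {poly int}) ^+ (n - k.+1)) => m1 m2 m3.
  ring.
rewrite S1 S2.
move: ((-1 : {poly int}) ^+ k.+1) => m1; ring.
Qed.

Lemma eqm_sumo N L (F G : 'I_L -> {poly int}) :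
  (forall k, eqm N (F k) (G k)) -> eqm N (\sum_(k < L) F k) (\sum_(k < L) G k).
Proof.
move=> H i Hi; rewrite !coef_sum; apply: eq_bigr => k _; exact: H.
Qed.

Lemma termX N d (A : {poly int}) : ((d <= N)%N -> eqm N A 1) -> eqm N ('X^d * A) 'X^d.
Proof.
case: (leqP d N) => Hd H.
  by setoid_rewrite (H is_true_true); rewrite mulr1; reflexivity.
rewrite (eqm_high A Hd) -[X in eqm _ _ X]mulr1 (eqm_high 1 Hd); reflexivity.
Qed.

Lemma jtp_mod N s c n : (0 < s)%N -> (2 * N + 2 <= n)%N ->
  eqm N (P s (2 * (s + c)) n * P (s + 2 * c) (2 * (s + c)) n * P (2 * (s + c)) (2 * (s + c)) n)
        (theta s c n).
Proof.
move=> Hs Hn.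
have Hb : (0 < s + c)%N by rewrite addn_gt0 Hs.
rewrite jtp_Z /theta; apply: eqm_add_Proper.
  by apply: qbE => //; lia.
apply: eqm_sumo => -[k Hk] /=; apply: eqm_mul_Proper; first reflexivity.
apply: eqm_add_Proper; apply: termX => Hd.
  apply: qbE => //; nia.
apply: qbE => //; nia.
Qed.

Lemma trunc_dec N : trunc_prod N = P 1 1 N ^+ 2 * Q N 2 2 N * Q N 3 3 N ^+ 2.
Proof.
rewrite /trunc_prod big_add1 /= big_mkord !big_split /=.
have -> : \prod_(i < N) (1 - 'X^(i.+1)) = P 1 1 N :> {poly int}.
  by apply: eq_bigr => k _; rewrite add1n mul1n.
have -> : \prod_(i < N) geomP (2 * i.+1) N = Q N 2 2 N.
  by apply: eq_bigr => k _; congr geomP; ring.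
have -> : \prod_(i < N) geomP (3 * i.+1) N = Q N 3 3 N.
  by apply: eq_bigr => k _; congr geomP; ring.
by rewrite !expr2 !mulrA.
Qed.

Lemma sgn3 m j : (-1 : {poly int}) ^+ (3 * m + j) = (-1) ^+ (m + j).
Proof.
have -> : (3 * m + j = 2 * m + (m + j))%N by ring.
by rewrite exprD exprM sqrrN !expr1n mul1r.
Qed.

Definition Ssum s c n : {poly int} := \sum_(k < n) (-1) ^+ k.+1 *
      ('X^(s * k.+1 ^ 2 + c * k.+1 * k) + 'X^((s + c) * k.+1 ^ 2 + c * k.+1)).

Lemma SsumS s c n : Ssum s c n.+1 = Ssum s c n +
   (-1) ^+ n.+1 * ('X^(s * n.+1 ^ 2 + c * n.+1 * n) + 'X^((s + c) * n.+1 ^ 2 + c * n.+1)).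
Proof. by rewrite /Ssum big_ord_recr. Qed.

Lemma dissect_sum m : Ssum 1 0 (3 * m).+1 = Ssum 9 0 m - (2 : {poly int}) * 'X * (1 + Ssum 3 6 m).
Proof.
elim: m => [|m IH].
  rewrite /Ssum !big_ord0 big_ord1 /= expr1 !addr0.
  have -> : ('X^(1 * 1 ^ 2 + 0 * 1 * 0) : {poly int}) = 'X by rewrite expr1.
  ring.
have -> : (3 * m.+1).+1 = ((3 * m).+1).+1.+1.+1 by ring.
do 3 rewrite [Ssum 1 0 _]SsumS.
rewrite IH !SsumS.
have -> : (1 * (3 * m).+2 ^ 2 + 0 * (3 * m).+2 * (3 * m).+1 = 1 + (3 * m.+1 ^ 2 + 6 * m.+1 * m))%N by ring.
have -> : (1 * (3 * m).+3 ^ 2 + 0 * (3 * m).+3 * (3 * m).+2 = 9 * m.+1 ^ 2 + 0 * m.+1 * m)%N by ring.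
have -> : ((9 + 0) * m.+1 ^ 2 + 0 * m.+1 = 9 * m.+1 ^ 2 + 0 * m.+1 * m)%N by ring.
have -> : (1 * (3 * m).+4 ^ 2 + 0 * (3 * m).+4 * (3 * m).+3 = 1 + ((3 + 6) * m.+1 ^ 2 + 6 * m.+1))%N by ring.
have -> : ((3 * m).+4 = 3 * m + 4)%N by ring.
have -> : ((3 * m).+3 = 3 * m + 3)%N by ring.
have -> : ((3 * m).+2 = 3 * m + 2)%N by ring.
rewrite !sgn3 !exprD !expr1.
have -> : (-1 : {poly int}) ^+ 2 = 1 by rewrite sqrrN expr1n.
have -> : (-1 : {poly int}) ^+ 3 = -1 by rewrite exprS sqrrN expr1n mulr1.
have -> : (-1 : {poly int}) ^+ 4 = 1 by rewrite (exprM _ 2 2) sqrrN !expr1n.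
rewrite exprS.
move: ((-1 : {poly int}) ^+ m) => sg; ring.
Qed.

Definition Z3 (p : {poly int}) := forall k, (k %% 3 != 0)%N -> p`_k = 0.

Lemma Z3M p q : Z3 p -> Z3 q -> Z3 (p * q).
Proof.
move=> Hp Hq k Hk; rewrite coefM; apply: big1 => -[j Hj] _ /=.
case: (eqVneq (j %% 3) 0)%N => H1; last by rewrite Hp // mul0r.
rewrite Hq ?mulr0 //; apply/eqP => H2; move/eqP: Hk; apply.
have Hjk : (j <= k)%N by rewrite -ltnS.
by rewrite -(subnKC Hjk) -modnDm H1 H2.
Qed.

Lemma Z3D p q : Z3 p -> Z3 q -> Z3 (p + q).
Proof. by move=> Hp Hq k Hk; rewrite coefD Hp ?Hq ?addr0. Qed.

Lemma Z3N p : Z3 p -> Z3 (- p).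
Proof. by move=> Hp k Hk; rewrite coefN Hp ?oppr0. Qed.

Lemma Z3X e : (e %% 3 = 0)%N -> Z3 'X^e.
Proof.
move=> He k Hk; rewrite coefXn; case: eqP => // Hke.
by move: Hk; rewrite Hke He.
Qed.

Lemma Z3_1 : Z3 1.
Proof. by rewrite -(expr0 'X); apply: Z3X. Qed.

Lemma Z3C (c : {poly int}) p : (forall i, (0 < i)%N -> c`_i = 0) -> Z3 p -> Z3 (c * p).
Proof.
move=> Hc Hp; apply: Z3M => // k Hk; apply: Hc.
by case: k Hk.
Qed.

Lemma Z3sum n (F : 'I_n -> {poly int}) : (forall k, Z3 (F k)) -> Z3 (\sum_(k < n) F k).
Proof. by move=> H k Hk; rewrite coef_sum; apply: big1 => i _; apply: H. Qed.

Lemma Z3prod n (F : 'I_n -> {poly int}) : (forall k, Z3 (F k)) -> Z3 (\prod_(k < n) F k).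
Proof.
elim: n F => [|n IH] F H; first by rewrite big_ord0; apply: Z3_1.
by rewrite big_ord_recr /=; apply: Z3M => //; apply: IH.
Qed.

Lemma sign_const k i : (0 < i)%N -> ((-1 : {poly int}) ^+ k)`_i = 0.
Proof.
move=> Hi; rewrite -signr_odd; case: (odd k); rewrite /= ?expr1 ?expr0.
  by rewrite -polyCN coefC; case: i Hi.
by rewrite coefC; case: i Hi.
Qed.

Lemma Z3geom e N : (e %% 3 = 0)%N -> Z3 (geomP e N).
Proof.
move=> He; apply: Z3sum => k; apply: Z3X.
by rewrite -modnMml He.
Qed.

Lemma Z3Q N L : Z3 (Q N 3 3 L).
Proof. apply: Z3prod => k; apply: Z3geom; lia. Qed.

Lemma Z3S90 m : Z3 (Ssum 9 0 m).
Proof.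
apply: Z3sum => k; apply: Z3C; first by move=> i; apply: sign_const.
by apply: Z3D; apply: Z3X; rewrite !mul0n !addn0 -modnMml.
Qed.

Lemma Z3S36 m : Z3 (1 + Ssum 3 6 m).
Proof.
apply: Z3D; first by apply: Z3_1.
apply: Z3sum => k; apply: Z3C; first by move=> i; apply: sign_const.
apply: Z3D; apply: Z3X; lia.
Qed.

Definition good (p : {poly int}) := (forall i, 0 <= p`_i) /\ 1 <= p`_0.

Lemma good_mul p q : good p -> good q -> good (p * q).
Proof.
move=> [Hp Hp0] [Hq Hq0]; split.
  by move=> i; rewrite coefM; apply: sumr_ge0 => j _; apply: mulr_ge0.
rewrite coef0M; have := mulr_ege1 Hp0 Hq0; done.
Qed.

Lemma geom_coef e N j : (0 < e)%N -> (j <= N)%N -> 1 <= (geomP e N)`_(e * j).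
Proof.
move=> He Hj; rewrite /geomP coef_sum.
rewrite (bigD1 (Ordinal (n := N.+1) (m := j) Hj)) //= coefXn eqxx.
rewrite lerDl; apply: sumr_ge0 => i _; rewrite coefXn; by case: eqP.
Qed.

Lemma good_geom e N : (0 < e)%N -> good (geomP e N).
Proof.
move=> He; split.
  by move=> i; rewrite coef_sum; apply: sumr_ge0 => j _; rewrite coefXn; case: eqP.
by have := @geom_coef e N 0 He (leq0n N); rewrite muln0.
Qed.

Lemma good_1 : good 1.
Proof. by split => [i|]; rewrite coefC //; case: i. Qed.

Lemma good_Q N a d L : (0 < a)%N -> good (Q N a d L).
Proof.
move=> Ha; elim: L => [|L IH]; first by rewrite /Q big_ord0; apply: good_1.
rewrite /Q big_ord_recr /=; apply: good_mul => //; apply: good_geom; lia.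
Qed.

Lemma good_exp p k : good p -> good (p ^+ k).
Proof. by move=> H; elim: k => [|k IH]; [apply: good_1 | rewrite exprS; apply: good_mul]. Qed.

Lemma key_pos e N j R : good R -> (0 < e)%N -> (j <= N)%N -> 1 <= (geomP e N * R)`_(e * j).
Proof.
move=> [HR HR0] He Hj; rewrite coefM big_ord_recr /= subnn.
have H1 := @geom_coef e N j He Hj.
apply: ler_wpDl; last exact: mulr_ege1.
apply: sumr_ge0 => i _; apply: mulr_ge0 => //.
by case: (@good_geom e N He) => G _; apply: G.
Qed.

Lemma Qfirst N a d L : Q N a d L.+1 = geomP a N * Q N (a + d) d L.
Proof.
rewrite /Q big_ord_recl /= muln0 addn0; congr (_ * _).
by apply: eq_bigr => k _; congr geomP; rewrite /bump /= add1n mulnS; ring.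
Qed.

Lemma eqm_refl' N (p q : {poly int}) : p = q -> eqm N p q.
Proof. by move=> ->; reflexivity. Qed.

Lemma eqm_cancel N (U A B : {poly int}) : eqm N (U * A) 1 -> eqm N (U * B) 1 -> eqm N A B.
Proof.
move=> HA HB.
transitivity (A * (U * B)); first by setoid_rewrite HB; rewrite mulr1; reflexivity.
rewrite mulrA (mulrC A); setoid_rewrite HA; rewrite mul1r; reflexivity.
Qed.

Lemma Ptr N a d L L' : (0 < a)%N -> (0 < d)%N -> (N <= L)%N -> (N <= L')%N ->
  eqm N (P a d L) (P a d L').
Proof. exact: P_trunc. Qed.

Section Main.
Variable N : nat.
Let m := (2 * N + 2)%N.
Let n0 := (3 * m).+1.
Let G3 := Q N 3 3 N.

Lemma L1 : eqm N (trunc_prod N) (theta 1 0 n0 * G3 ^+ 2).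
Proof.
rewrite trunc_dec.
have J : eqm N (P 1 2 n0 * P 1 2 n0 * P 2 2 n0) (theta 1 0 n0).
  by apply: (@jtp_mod N 1 0 n0) => //; rewrite /n0 /m; lia.
have A : eqm N (P 1 1 N) (P 1 2 n0 * P 2 2 n0).
  rewrite (P_inter2 1 1 n0); apply: Ptr => //; rewrite /n0 /m; lia.
have K : eqm N (P 2 2 n0 * Q N 2 2 N) 1.
  have T : eqm N (P 2 2 n0) (P 2 2 N) by apply: Ptr => //; rewrite /n0 /m; lia.
  setoid_rewrite T; exact: PQ_inv.
setoid_rewrite A.
transitivity ((P 1 2 n0 * P 1 2 n0 * P 2 2 n0) * (P 2 2 n0 * Q N 2 2 N) * G3 ^+ 2).
  rewrite /G3; apply: eqm_refl'; ring.
setoid_rewrite K; setoid_rewrite J; rewrite mulr1; reflexivity.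
Qed.

Definition U0 := P 3 9 N.+1 ^+ 2 * P 6 9 N.+1 ^+ 2 * P 18 18 N.+1.
Definition Pos0 := Q N 3 9 N.+1 ^+ 2 * Q N 6 9 N.+1 ^+ 2 * Q N 18 18 N.+1.

Lemma mN : (N <= m)%N. Proof. rewrite /m; lia. Qed.

Lemma L3 : eqm N (theta 9 0 m * G3 ^+ 2) Pos0.
Proof.
apply: (@eqm_cancel N U0).
  have J : eqm N (P 9 18 m * P 9 18 m * P 18 18 m) (theta 9 0 m).
    by apply: (@jtp_mod N 9 0 m) => //; rewrite /m; lia.
  setoid_rewrite <- J.
  rewrite /U0.
  have T1 : eqm N (P 3 9 N.+1) (P 3 9 m) by apply: Ptr => //; rewrite /m; lia.
  have T2 : eqm N (P 6 9 N.+1) (P 6 9 m) by apply: Ptr => //; rewrite /m; lia.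
  have T3 : eqm N (P 18 18 N.+1) (P 18 18 m) by apply: Ptr => //; rewrite /m; lia.
  setoid_rewrite T1; setoid_rewrite T2; setoid_rewrite T3.
  have I2 : P 9 18 m * P 18 18 m = P 9 9 (2 * m) := P_inter2 9 9 m.
  have I3 : P 3 9 m * P 6 9 m * P 9 9 m = P 3 3 (3 * m) := P_inter3 3 3 m.
  transitivity ((P 3 9 m * P 6 9 m * (P 9 18 m * P 18 18 m)) ^+ 2 * G3 ^+ 2).
    by apply: eqm_refl'; ring.
  rewrite I2.
  have T4 : eqm N (P 9 9 (2 * m)) (P 9 9 m) by apply: Ptr => //; rewrite /m; lia.
  setoid_rewrite T4; rewrite I3.
  have T5 : eqm N (P 3 3 (3 * m)) (P 3 3 N) by apply: Ptr => //; rewrite /m; lia.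
  setoid_rewrite T5; rewrite -exprMn /G3.
  setoid_rewrite (@PQ_inv N 3 3 N isT); rewrite expr1n; reflexivity.
rewrite /U0 /Pos0.
transitivity ((P 3 9 N.+1 * Q N 3 9 N.+1) ^+ 2 * (P 6 9 N.+1 * Q N 6 9 N.+1) ^+ 2 *
   (P 18 18 N.+1 * Q N 18 18 N.+1)).
  by apply: eqm_refl'; ring.
setoid_rewrite (@PQ_inv N 3 9 N.+1 isT).
setoid_rewrite (@PQ_inv N 6 9 N.+1 isT).
setoid_rewrite (@PQ_inv N 18 18 N.+1 isT).
rewrite expr1n !mulr1; reflexivity.
Qed.

Definition U1 := P 6 18 N.+1 * P 9 18 N.+1 * P 12 18 N.+1 * P 3 3 N.+1.
Definition Pos1 := Q N 6 18 N.+1 * Q N 9 18 N.+1 * Q N 12 18 N.+1 * Q N 3 3 N.+1.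

Lemma L4 : eqm N ((1 + Ssum 3 6 m) * G3 ^+ 2) Pos1.
Proof.
apply: (@eqm_cancel N U1).
  have J : eqm N (P 3 18 m * P 15 18 m * P 18 18 m) (1 + Ssum 3 6 m).
    by apply: (@jtp_mod N 3 6 m) => //; rewrite /m; lia.
  setoid_rewrite <- J.
  rewrite /U1.
  have T1 : eqm N (P 6 18 N.+1) (P 6 18 m) by apply: Ptr => //; rewrite /m; lia.
  have T2 : eqm N (P 9 18 N.+1) (P 9 18 m) by apply: Ptr => //; rewrite /m; lia.
  have T3 : eqm N (P 12 18 N.+1) (P 12 18 m) by apply: Ptr => //; rewrite /m; lia.
  have T4 : eqm N (P 3 3 N.+1) (P 3 3 N) by apply: Ptr => //; rewrite /m; lia.
  setoid_rewrite T1; setoid_rewrite T2; setoid_rewrite T3; setoid_rewrite T4.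
  have I1 : P 3 18 m * P 9 18 m * P 15 18 m = P 3 6 (3 * m) := P_inter3 3 6 m.
  have I2 : P 6 18 m * P 12 18 m * P 18 18 m = P 6 6 (3 * m) := P_inter3 6 6 m.
  have I3 : P 3 6 (3 * m) * P 6 6 (3 * m) = P 3 3 (2 * (3 * m)) := P_inter2 3 3 (3 * m).
  transitivity ((P 3 18 m * P 9 18 m * P 15 18 m) * (P 6 18 m * P 12 18 m * P 18 18 m) * P 3 3 N * G3 ^+ 2).
    by apply: eqm_refl'; ring.
  rewrite I1 I2 I3.
  have T5 : eqm N (P 3 3 (2 * (3 * m))) (P 3 3 N) by apply: Ptr => //; rewrite /m; lia.
  setoid_rewrite T5; rewrite /G3.
  transitivity ((P 3 3 N * Q N 3 3 N) ^+ 2); first by apply: eqm_refl'; ring.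
  setoid_rewrite (@PQ_inv N 3 3 N isT); rewrite expr1n; reflexivity.
rewrite /U1 /Pos1.
transitivity ((P 6 18 N.+1 * Q N 6 18 N.+1) * (P 9 18 N.+1 * Q N 9 18 N.+1) *
   (P 12 18 N.+1 * Q N 12 18 N.+1) * (P 3 3 N.+1 * Q N 3 3 N.+1)).
  by apply: eqm_refl'; ring.
setoid_rewrite (@PQ_inv N 6 18 N.+1 isT).
setoid_rewrite (@PQ_inv N 9 18 N.+1 isT).
setoid_rewrite (@PQ_inv N 12 18 N.+1 isT).
setoid_rewrite (@PQ_inv N 3 3 N.+1 isT).
rewrite !mulr1; reflexivity.
Qed.
End Main.

Lemma a_expr n : a n =
  (theta 9 0 (2 * n + 2) * Q n 3 3 n ^+ 2)`_n -
  ('X * ((1 + Ssum 3 6 (2 * n + 2)) * Q n 3 3 n ^+ 2))`_n *+ 2.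
Proof.
rewrite /a (L1 (leqnn n)).
have -> : theta 1 0 (3 * (2 * n + 2)).+1 = 1 + Ssum 1 0 (3 * (2 * n + 2)).+1 by [].
rewrite dissect_sum.
have -> : (1 + (Ssum 9 0 (2 * n + 2) - 2 * 'X * (1 + Ssum 3 6 (2 * n + 2)))) * Q n 3 3 n ^+ 2 =
   theta 9 0 (2 * n + 2) * Q n 3 3 n ^+ 2 -
   ('X * ((1 + Ssum 3 6 (2 * n + 2)) * Q n 3 3 n ^+ 2)) *+ 2.
  rewrite /theta -/(Ssum 9 0 _); ring.
by rewrite coefB coefMn.
Qed.

Lemma Z3r0 n : Z3 (theta 9 0 (2 * n + 2) * Q n 3 3 n ^+ 2).
Proof.
apply: Z3M; first by apply: Z3D; [apply: Z3_1 | apply: Z3S90].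
by rewrite expr2; apply: Z3M; apply: Z3Q.
Qed.

Lemma Z3r1 n : Z3 ((1 + Ssum 3 6 (2 * n + 2)) * Q n 3 3 n ^+ 2).
Proof.
apply: Z3M; first by apply: Z3S36.
by rewrite expr2; apply: Z3M; apply: Z3Q.
Qed.

Theorem theorem1p3 (n : nat) :
  ((n %% 3 = 0)%N -> 0 < a n) /\
  ((n %% 3 = 1)%N -> a n < 0) /\
  ((n %% 3 = 2)%N -> a n = 0).
Proof.
rewrite a_expr coefXM.
set r0 := theta 9 0 (2 * n + 2) * Q n 3 3 n ^+ 2.
set r1 := (1 + Ssum 3 6 (2 * n + 2)) * Q n 3 3 n ^+ 2.
have Z0 := Z3r0 n; have Z1 := Z3r1 n.
rewrite -/r0 -/r1 in Z0 Z1.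
split; [|split] => Hn.
- have -> : (if n == 0%N then 0 else r1`_n.-1) = 0.
    case: eqP => // Hn0; apply: Z1; lia.
  rewrite mul0rn subr0.
  have -> : r0`_n = (Pos0 n)`_n by apply: L3.
  have -> : Pos0 n = geomP 3 n * (Q n 12 9 n * Q n 3 9 n.+1 * Q n 6 9 n.+1 ^+ 2 * Q n 18 18 n.+1).
    rewrite /Pos0 expr2 {1}Qfirst; ring.
  have Hd : n = (3 * (n %/ 3))%N by rewrite {1}(divn_eq n 3) Hn addn0 mulnC.
  apply: (lt_le_trans ltr01).
  set pp := geomP 3 n * _; rewrite Hd /pp; apply: key_pos => //.
    apply: good_mul; first apply: good_mul; first apply: good_mul.
    + by apply: good_Q.
    + by apply: good_Q.
    + by apply: good_exp; apply: good_Q.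
    + by apply: good_Q.
  by apply: leq_div.
- have -> : r0`_n = 0 by apply: Z0; lia.
  have Hn0 : (n == 0%N) = false by apply/eqP; lia.
  rewrite Hn0 sub0r oppr_lt0.
  have -> : r1`_n.-1 = (Pos1 n)`_n.-1 by apply: L4; lia.
  have -> : Pos1 n = geomP 3 n * (Q n 6 18 n.+1 * Q n 9 18 n.+1 * Q n 12 18 n.+1 * Q n 6 3 n).
    rewrite /Pos1 (Qfirst n 3 3 n); ring.
  have Hd : n.-1 = (3 * (n.-1 %/ 3))%N.
    rewrite {1}(divn_eq n.-1 3) mulnC.
    have -> : (n.-1 %% 3 = 0)%N by lia.
    by rewrite addn0.
  set pp := geomP 3 n * _; rewrite Hd /pp pmulrn_lgt0 //; apply: (lt_le_trans ltr01); apply: key_pos => //.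
    apply: good_mul; first apply: good_mul; first apply: good_mul; by apply: good_Q.
  by apply: (leq_trans (leq_div _ _)); rewrite leq_pred.
- have -> : r0`_n = 0 by apply: Z0; lia.
  have -> : (if n == 0%N then 0 else r1`_n.-1) = 0.
    case: eqP => // Hn0; apply: Z1; lia.
  by rewrite mul0rn subr0.
Qed.
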